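(* Let \(\mathcal{I}\) be an instance of 3-SAT and let \(G(\mathcal{I})\), \(T(\mathcal{I})\) be as constructed below. If an MNS ordering or an MCS ordering \(\sigma\) of \(G(\mathcal{I})\) has \(\mathcal{F}\)-tree \(T(\mathcal{I})\), then in \(\sigma\) the vertex \(b\) appears before every clause vertex \(c_i\).
   Context: Let \(\mathcal{I}\) have variables \(x_1,\dots,x_k\) and clauses \(C_1,\dots,C_l\), each a disjunction of three literals. \(G(\mathcal{I})\) has vertices: literal vertices \(X=\{x_1,\dots,x_k,\overline{x_1},\dots,\overline{x_k}\}\), clause vertices \(c_1,\dots,c_l\), and six vertices \(r,p,q,a,b,t\). Edges: any two vertices of \(X\) are adjacent except the pairs \(x_j\overline{x_j}\); the clause vertices are pairwise nonadjacent; \(c_i\) is adjacent to every vertex of \(X\) except the three literal vertices of the literals of \(C_i\); each of \(r,p,q,a\) is adjacent to all literal vertices and all clause vertices; \(b\) is adjacent to all literal vertices; additionally the edges \(ab,ap,aq,bq,br,bt,pr,qr,qt\); no other edges. \(T(\mathcal{I})\) is the spanning tree consisting of all edges of \(G(\mathcal{I})\) incident to \(r\) together with the edges \(pa\) and \(bt\). With \(n\) the number of vertices: an MCS ordering is produced by repeatedly choosing an unnumbered vertex with the largest number of numbered neighbors; an MNS ordering uses set labels (all \(\emptyset\), start vertex gets \(\{n+1\}\); repeatedly pick an unnumbered vertex with inclusion-maximal label as \(v_j\) and add \(j\) to the labels of its unnumbered neighbors); ties are arbitrary. The \(\mathcal{F}\)-tree of an ordering \((v_1,\dots,v_n)\)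 has, for each \(v\ne v_1\), an edge from \(v\) to its leftmost neighbor in the ordering. *)

(* Defs.v *)
From mathcomp Require Import all_boot.
Set Implicit Arguments. Unset Strict Implicit. Unset Printing Implicit Defensive.

(* A 3-SAT instance with k variables and l clauses:
   a literal is a pair (j, s) : 'I_k * bool, s = true meaning x_j, s = false
   meaning the negation of x_j; clause C_i is a triple of literals. *)
Definition literal (k : nat) := ('I_k * bool)%type.
Definition instance (k l : nat) := 'I_l -> 3.-tuple (literal k).

(* Vertices of G(I): literal vertices, clause vertices, and six special
   vertices r,p,q,a,b,t encoded as 0,1,2,3,4,5 of 'I_6. *)
Definition vert (k l : nat) := ((literal k + 'I_l) + 'I_6)%type.

Section Vertices.
Variables k l : nat.
Definition LitV (x : literal k) : vert k l := inl (inl x).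
Definition ClV (i : 'I_l) : vert k l := inl (inr i).
Definition SpV (s : 'I_6) : vert k l := inr s.
Definition vr : vert k l := SpV (@Ordinal 6 0 isT).
Definition vp : vert k l := SpV (@Ordinal 6 1 isT).
Definition vq : vert k l := SpV (@Ordinal 6 2 isT).
Definition va : vert k l := SpV (@Ordinal 6 3 isT).
Definition vb : vert k l := SpV (@Ordinal 6 4 isT).
Definition vt : vert k l := SpV (@Ordinal 6 5 isT).
End Vertices.
Arguments vr {k l}. Arguments vp {k l}. Arguments vq {k l}.
Arguments va {k l}. Arguments vb {k l}. Arguments vt {k l}.

(* One-directional listing of the edges; symmetrized in Gadj. *)
Definition Gedge0 k l (C : instance k l) (u v : vert k l) : bool :=
  match u, v with
  | inl (inl x), inl (inl y) => x.1 != y.1          (* all of X except x_j ~x_j *)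
  | inl (inr i), inl (inl x) => x \notin C i
  | inr s, inl (inl _) => (s : nat) < 5             (* r,p,q,a,b to all of X *)
  | inr s, inl (inr _) => (s : nat) < 4             (* r,p,q,a to all clauses *)
  | inr s, inr s' =>                                 (* ab,ap,aq,bq,br,bt,pr,qr,qt *)
      ((s : nat), (s' : nat)) \in
        [:: (3,4); (3,1); (3,2); (4,2); (4,0); (4,5); (1,0); (2,0); (2,5)]
  | _, _ => false
  end.

Definition Gadj k l (C : instance k l) : rel (vert k l) :=
  fun u v => (u != v) && (Gedge0 C u v || Gedge0 C v u).

Definition Tadj k l (C : instance k l) : rel (vert k l) :=
  fun u v => (Gadj C u v && ((u == vr) || (v == vr)))
             || ((u == vp) && (v == va)) || ((u == va) && (v == vp))
             || ((u == vb) && (v == vt)) || ((u == vt) && (v == vb)).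

Section Orderings.
Variables (T : finType) (e : rel T).

Definition is_ordering (sigma : seq T) : Prop :=
  uniq sigma /\ forall x, x \in sigma.

Definition numbered_nbrs (pre : seq T) (w : T) : {set T} :=
  [set u | (u \in pre) && e w u].

Definition is_MCS (sigma : seq T) : Prop :=
  is_ordering sigma /\
  forall pre v post, sigma = pre ++ v :: post ->
    forall w, w \in v :: post ->
      #|numbered_nbrs pre w| <= #|numbered_nbrs pre v|.

(* MNS: the label of an unnumbered vertex w before step j is the set of
   indices of its numbered neighbours (the start vertex v_1 is forced by the
   label {n+1} and is otherwise arbitrary); v_j must have an
   inclusion-maximal label.  Labels are represented by the corresponding
   sets of numbered neighbours, which is in inclusion-preserving bijection
   with the index sets since sigma is duplicate-free. *)
Definition is_MNS (sigma : seq T) : Prop :=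
  is_ordering sigma /\
  forall pre v post, sigma = pre ++ v :: post ->
    forall w, w \in v :: post ->
      ~~ (numbered_nbrs pre v \proper numbered_nbrs pre w).

Definition leftmost_nbr (sigma : seq T) (u w : T) : bool :=
  e u w && all (fun x => ~~ e u x) (take (index w sigma) sigma).

Definition Ftree_adj (sigma : seq T) : rel T :=
  fun u w => ((u != head u sigma) && leftmost_nbr sigma u w)
             || ((w != head w sigma) && leftmost_nbr sigma w u).
End Orderings.

(* Main.v *)
Require Import Defs.
From mathcomp Require Import all_boot.

Section Facts.
Variables (k l : nat) (C : instance k l).

Lemma adj_t u : Gadj C vt u -> u = vb \/ u = vq.
Proof.
case: u => [[x|j]|s]; rewrite /Gadj //=.
case: s => [[|[|[|[|[|[|?]]]]]] ?] //=; rewrite /vb /vq /SpV.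
all: try (by left; congr inr; apply: val_inj); try (by right; congr inr; apply: val_inj).
Qed.

Lemma adj_bq u : Gadj C vb u -> u != vq -> Gadj C vq u.
Proof.
case: u => [[x|j]|s]; rewrite /Gadj //=.
case: s => [[|[|[|[|[|[|?]]]]]] ?] //=.
Qed.

Lemma adj_qc i : Gadj C vq (ClV k i).
Proof. by []. Qed.

Lemma nadj_bc i : ~~ Gadj C vb (ClV k i).
Proof. by []. Qed.

Lemma adj_qt : Gadj C vq vt. Proof. by []. Qed.
Lemma nT_qt : ~~ Tadj C vq vt. Proof. by []. Qed.
Lemma nT_tq : ~~ Tadj C vt vq. Proof. by []. Qed.
End Facts.

Theorem lemma9 (k l : nat) (C : instance k l) (sigma : seq (vert k l)) :
  (is_MNS (Gadj C) sigma \/ is_MCS (Gadj C) sigma) ->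
  (forall u w, Ftree_adj (Gadj C) sigma u w = Tadj C u w) ->
  forall i : 'I_l, index vb sigma < index (ClV k i) sigma.
Proof.
move=> Hs HF i.
have [Hu Hall] : is_ordering sigma by case: Hs => [[]|[]].
have Hhead : forall s, sigma <> vt :: s.
  move=> s Es; move: (HF vq vt); rewrite (negbTE (@nT_qt _ _ C)) /Ftree_adj Es /= /leftmost_nbr.
  by [].
have Hidx : forall x y, index x sigma = index y sigma -> x = y.
  move=> x y E; have := nth_index x (Hall x); rewrite E nth_index //.
have Hbq : index vb sigma < index vq sigma.
  case: (ltngtP (index vb sigma) (index vq sigma)) => // [Hqb|/Hidx //].
  exfalso.
  move: (HF vt vq); rewrite (negbTE (@nT_tq _ _ C)) /Ftree_adj /leftmost_nbr.
  have -> : vt != head vt sigma.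
    move: (Hall vt) Hhead; case E0: sigma => [|x s] //= _ H.
    by apply/eqP => E; apply: (H s); rewrite -E.
  have -> : all (fun x => ~~ Gadj C vt x) (take (index vq sigma) sigma).
    apply/allP => x Hx; apply/negP => /adj_t [] E; subst x;
      rewrite (in_take _ (Hall _)) in Hx.
      by rewrite ltnNge (ltnW Hqb) in Hx.
    by rewrite ltnn in Hx.
  by [].
rewrite ltnNge; apply/negP => Hcb.
set n := index vb sigma.
set pre := take n sigma; set post := drop n.+1 sigma.
have Es : sigma = pre ++ vb :: post.
  have Hn : nth vb sigma n = vb by rewrite nth_index.
  by rewrite /pre /post -[in vb :: _]Hn -drop_nth ?index_mem // cat_take_drop.
have Hq : vq \in vb :: post.
  by move: (Hall vq); rewrite {1}Es mem_cat (in_take _ (Hall _)) ltnNge (ltnW Hbq) /=.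
have Hc : ClV k i \in pre.
  rewrite (in_take _ (Hall _)) ltn_neqAle Hcb andbT; apply/negP => /eqP /Hidx //.
have Hqpre : vq \notin pre by rewrite (in_take _ (Hall _)) ltnNge (ltnW Hbq).
have Hpr : numbered_nbrs (Gadj C) pre vb \proper numbered_nbrs (Gadj C) pre vq.
  apply/properP; split.
    apply/subsetP => u; rewrite !inE => /andP[Hu1 Hu2]; rewrite Hu1 /=.
    apply: adj_bq => //; apply/eqP => E; subst u; by rewrite Hu1 in Hqpre.
  exists (ClV k i); rewrite !inE Hc //=.
case: Hs => [[_ H]|[_ H]]; have := H pre vb post Es vq Hq.
  by rewrite Hpr.
by rewrite leqNgt proper_card.
Qed.
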